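(* For every graph $G$ with exactly $\ell$ vertices of degree $1$, $\mathrm{sp}(G)\ge \lceil 2(\ell-1)/3\rceil$.
   Context: A family of subsets $V_1,\dots,V_k$ of a set $V$ is a separating system of $V$ if for every two distinct $u,v\in V$ there is $i$ with $|V_i\cap\{u,v\}|=1$. For a graph $G$, $\mathrm{sp}(G)$ is the minimum size of a family $\mathcal P$ of paths in $G$ (single-vertex paths allowed) such that $\{V(P):P\in\mathcal P\}$ is a separating system of $V(G)$. *)

(* Defs.v *)
(* A finite simple graph on a finType T is a symmetric,
   irreflexive relation e : rel T. *)
From mathcomp Require Import all_boot.
Set Implicit Arguments. Unset Strict Implicit. Unset Printing Implicit Defensive.

Section Graphs.
Variable T : finType.
Variable e : rel T.

Definition deg (u : T) : nat := #|[set v | e u v]|.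

Definition num_leaves : nat := #|[set u | deg u == 1]|.

Definition is_gpath (p : seq T) : bool :=
  if p is x :: q then path e x q && uniq p else false.

Definition separating (F : seq (seq T)) : Prop :=
  forall u v : T, u != v -> exists2 P, P \in F & (u \in P) != (v \in P).

Definition sep_path_system (F : seq (seq T)) : Prop :=
  all is_gpath F /\ separating F.
End Graphs.

(* Main.v *)
Require Import Defs.
From mathcomp Require Import all_boot.
From mathcomp Require Import zify.

Lemma sum_ind (T : finType) (L : {pred T}) (b : pred T) :
  \sum_(x in L) (b x : nat) = #|[set x in L | b x]|.
Proof.
rewrite -sum1_card big_mkcond [RHS]big_mkcond /=; apply: eq_bigr => x _.
by rewrite inE; case: (x \in L); case: (b x).
Qed.

Lemma count1_eq (S : eqType) (a : pred S) (F : seq S) Q R :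
  count a F = 1 -> Q \in F -> R \in F -> a Q -> a R -> Q = R.
Proof.
rewrite -size_filter => H QF RF aQ aR.
have: Q \in filter a F by rewrite mem_filter aQ QF.
have: R \in filter a F by rewrite mem_filter aR RF.
case: (filter a F) H => [|P [|]] //= _.
by rewrite !inE => /eqP -> /eqP ->.
Qed.

Lemma leaf_end (T : finType) (e : rel T) (e_sym : symmetric e)
  (x x0 : T) (q : seq T) :
  deg e x = 1 -> path e x0 q -> uniq (x0 :: q) -> x \in x0 :: q ->
  (x == x0) || (x == last x0 q).
Proof.
move=> dx pq uq; rewrite inE; case: eqP => //= xx0 xq.
case/splitPr: xq pq uq => q1 q2.
rewrite cat_path last_cat => /andP [_ /= /andP [ea pb]] uq.
case: q2 pb uq => [|b q2]; first by move=> _ _ /=; rewrite eqxx.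
move=> pb uq; case/andP: pb => eb _; exfalso.
have ain : last x0 q1 \in x0 :: q1 by apply: mem_last.
have ab : last x0 q1 != b.
  apply/eqP => ab.
  move: uq; rewrite -[_ && _]/(uniq (x0 :: q1 ++ x :: b :: q2)) -cat_cons cat_uniq => /and3P [_ /hasP H _].
  by apply: H; exists b; rewrite ?inE ?eqxx ?orbT // -ab.
have: #|[set last x0 q1; b]| <= deg e x.
  apply: subset_leq_card; apply/subsetP => v; rewrite !inE.
  by case/orP => /eqP ->; rewrite // e_sym.
by rewrite cards2 ab dx.
Qed.

Lemma path_leaves (T : finType) (e : rel T) (e_sym : symmetric e) (P : seq T) :
  is_gpath e P -> #|[set x in [set u | deg e u == 1] | x \in P]| <= 2.
Proof.
case: P => [|x0 q] //= /andP [pq uq].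
apply: leq_trans (_ : #|[set x0; last x0 q]| <= 2); last first.
  by rewrite cards2; case: (_ != _).
apply: subset_leq_card; apply/subsetP => x; rewrite !inE => /andP [/eqP dx xP].
by apply: leaf_end.
Qed.

Lemma dcount (T : finType) (e : rel T) (e_sym : symmetric e) (F : seq (seq T)) :
  all (is_gpath e) F ->
  \sum_(x in [set u | deg e u == 1]) count (fun P => x \in P) F <= 2 * size F.
Proof.
elim: F => [|P F IH] /=.
  by rewrite big1.
case/andP => gP aF; rewrite big_split /= sum_ind mulnS.
by apply: leq_add; [apply: path_leaves | apply: IH].
Qed.

Theorem lemma2p4 (T : finType) (e : rel T)
    (e_sym : symmetric e) (e_irr : irreflexive e) (l : nat) :
  num_leaves e = l ->
  forall F : seq (seq T), sep_path_system e F ->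
  (2 * (l - 1) + 2) %/ 3 <= size F.
Proof.
rewrite /num_leaves => <- F [aF sF].
set L := [set u | deg e u == 1].
set s := fun x => count (fun P : seq T => x \in P) F.
have hS : \sum_(x in L) s x <= 2 * size F := @dcount T e e_sym F aF.
have hZ : #|[set x in L | s x == 0]| <= 1.
  rewrite leqNgt; apply/negP => /card_gt1P [x [y [xZ yZ xy]]].
  move: xZ yZ; rewrite !inE => /andP [_ sx] /andP [_ sy].
  have [Q QF] := sF x y xy.
  have hx : forall z, s z == 0 -> z \in Q -> False.
    move=> z; rewrite /s -leqn0 leqNgt -has_count => /negP H zQ.
    by apply: H; apply/hasP; exists Q.
  case xQ: (x \in Q); case yQ: (y \in Q) => //= _; [exact: hx x sx xQ | exact: hx y sy yQ].
have hA : #|[set x in L | s x == 1]| <= size F.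
  set A := [set x in L | s x == 1].
  set f := fun x => find (fun P : seq T => x \in P) F.
  have hasx : forall x, x \in A -> has (fun P : seq T => x \in P) F.
    by move=> x; rewrite !inE has_count => /andP [_ /eqP]; rewrite /s => ->.
  rewrite cardE -(size_map f) -[X in _ <= X](size_iota 0); apply: uniq_leq_size.
    rewrite map_inj_in_uniq ?enum_uniq // => x y; rewrite !mem_enum => xA yA fxy.
    apply/eqP; apply/negP => /negP xy.
    have fl : f x < size F by rewrite -has_find hasx.
    set P := nth [::] F (f x).
    have PF : P \in F by apply: mem_nth.
    have xP : x \in P by apply: (nth_find [::] (hasx x xA)).
    have yP : y \in P by rewrite /P fxy; apply: (nth_find [::] (hasx y yA)).
    have [Q QF] := sF x y xy.
    move: xA yA; rewrite !inE => /andP [_ /eqP sx] /andP [_ /eqP sy].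
    case xQ: (x \in Q); case yQ: (y \in Q) => //= _.
      by move: yQ; rewrite (count1_eq _ _ _ _ _ sx QF PF xQ xP) yP.
    by move: xQ; rewrite (count1_eq _ _ _ _ _ sy QF PF yQ yP) xP.
  move=> i /mapP [x xA ->]; rewrite mem_iota /= add0n -has_find.
  by apply: hasx; rewrite -mem_enum.
have key : 2 * #|L| <= \sum_(x in L) s x + 2 * #|[set x in L | s x == 0]|
                      + #|[set x in L | s x == 1]|.
  rewrite -!sum_ind mulnC -sum_nat_const big_distrr /= -!big_split /=.
  apply: leq_sum => x _; case: (s x) => [|[|n]] //=.
have : 2 * (#|L| - 1) + 2 < 3 * (size F).+1 by lia.
move=> H; rewrite -ltnS ltn_divLR //; lia.
Qed.
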